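(* Let $G=(V,E)$ be an acyclic finite directed graph, $\Gamma\subset V$ containing all sinks and sources with $V\setminus\Gamma\ne\emptyset$, and let $z=(z_v)_{v\in\Gamma}$ with each $z_v$ a positive multiple of $I_d$. Then at any critical point $x$ of $\Phi_d$ restricted to $\mathcal P_d^V(z)$ such that every $x_v$ ($v\in V$) is a positive multiple of $I_d$, the Hessian of this restricted function (with respect to the independent real variables $x_v(i,j)$, $v\in V\setminus\Gamma$, $1\le i\le j\le d$) is positive definite.
   Context: $v\to w$ denotes an edge; sinks have no outgoing edges, sources no incoming edges. $\mathcal P_d$: $d\times d$ real symmetric positive definite matrices. $\mathcal P_d^V(z)=\{x=(x_v)_{v\in V}\in\mathcal P_d^V:x_v=z_v\ \forall v\in\Gamma\}$. $\Phi_d(x)=\sum_{v\to w}\operatorname{tr}[x_vx_w^{-1}]$ for $x\in\mathcal P_d^V$. *)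

(* Defs.v *)
From HB Require Import structures.
From mathcomp Require Import all_boot all_order all_algebra.
From mathcomp Require Import all_classical all_reals all_analysis.
Set Implicit Arguments. Unset Strict Implicit. Unset Printing Implicit Defensive.
Import Order.TTheory GRing.Theory Num.Theory.
Local Open Scope ring_scope.

Definition acyclic (V : finType) (e : rel V) : Prop :=
  forall v w : V, e v w -> ~~ connect e w v.

Definition is_sink (V : finType) (e : rel V) (v : V) : bool := [forall w, ~~ e v w].
Definition is_source (V : finType) (e : rel V) (v : V) : bool := [forall w, ~~ e w v].

Definition posdef (R : realType) (d : nat) (A : 'M[R]_d) : Prop :=
  A^T = A /\ forall u : 'rV[R]_d, u != 0 -> 0 < (u *m A *m u^T) 0 0.

Definition pos_scalar (R : realType) (d : nat) (A : 'M[R]_d) : Prop :=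
  exists c : R, 0 < c /\ A = c%:M.

Definition Phi (R : realType) (d : nat) (V : finType) (e : rel V)
  (x : V -> 'M[R]_d) : R :=
  \sum_(v : V) \sum_(w : V | e v w) \tr (x v *m invmx (x w)).

(* coordinates: a real number for each (v, i, j); only those with
   v \notin Gamma and i <= j are used (the independent variables). *)
Definition coords (R : realType) (V : finType) (d : nat) :=
  V * 'I_d * 'I_d -> R.

Definition is_var (V : finType) (d : nat) (Gamma : {set V})
  (k : V * 'I_d * 'I_d) : bool :=
  (k.1.1 \notin Gamma) && (k.1.2 <= k.2)%N.

Definition symmat (R : realType) (V : finType) (d : nat)
  (Y : coords R V d) (v : V) : 'M[R]_d :=
  \matrix_(i, j) (if (i <= j)%N then Y (v, i, j) else Y (v, j, i)).

(* Phi_d restricted to P_d^V(z), as a function of the independent variables *)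
Definition PhiRestr (R : realType) (d : nat) (V : finType) (e : rel V)
  (Gamma : {set V}) (z : V -> 'M[R]_d) (Y : coords R V d) : R :=
  Phi e (fun v => if v \in Gamma then z v else symmat Y v).

Definition shift (R : realType) (V : finType) (d : nat)
  (Y : coords R V d) (k : V * 'I_d * 'I_d) (t : R) : coords R V d :=
  fun l => Y l + (if l == k then t else 0).

Definition pderiv (R : realType) (V : finType) (d : nat)
  (k : V * 'I_d * 'I_d) (f : coords R V d -> R) : coords R V d -> R :=
  fun Y => derive1 (fun t : R => f (shift Y k t)) 0.

Definition hessian (R : realType) (V : finType) (d : nat)
  (f : coords R V d -> R) (Y : coords R V d) (k l : V * 'I_d * 'I_d) : R :=
  pderiv k (pderiv l f) Y.

Definition hessian_posdef (R : realType) (V : finType) (d : nat)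
  (Gamma : {set V}) (f : coords R V d -> R) (Y : coords R V d) : Prop :=
  forall c : V * 'I_d * 'I_d -> R,
    (exists k, is_var Gamma k /\ c k != 0) ->
    0 < \sum_(k | is_var Gamma k) \sum_(l | is_var Gamma l)
          c k * hessian f Y k l * c l.

(* Main.v *)
From HB Require Import structures.
From mathcomp Require Import all_boot all_order all_algebra.
From mathcomp Require Import all_classical all_reals all_analysis.
Require Import Defs.
From mathcomp Require Import ring lra.
Set Implicit Arguments. Unset Strict Implicit. Unset Printing Implicit Defensive.
Import Order.TTheory GRing.Theory Num.Theory.
Local Open Scope ring_scope.
Import numFieldNormedType.Exports.

Section S.
Variable R : realType.
Implicit Types x : R.

Lemma isd_sum (I : Type) (r : seq I) (P : pred I) (h : I -> R -> R) dh x :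
  (forall i, P i -> is_derive x 1 (h i) (dh i)) ->
  is_derive x 1 (fun t => \sum_(i <- r | P i) h i t) (\sum_(i <- r | P i) dh i).
Proof.
move=> H; elim: r => [|i r IH].
  rewrite big_nil; under eq_fun do rewrite big_nil; exact: is_derive_cst.
rewrite big_cons; under eq_fun do rewrite big_cons.
case: (boolP (P i)) => Pi; last exact: IH.
have := is_deriveD (H i Pi) IH; exact.
Qed.

Lemma isd_mul (f g : R -> R) df dg x : is_derive x 1 f df -> is_derive x 1 g dg ->
  is_derive x 1 (fun t => f t * g t) (df * g x + f x * dg).
Proof.
move=> Hf Hg; have H := is_deriveM Hf Hg.
apply: is_derive_eq H _ => /=.
by rewrite /GRing.scale /= addrC [f x * _]mulrC [g x * _]mulrC.
Qed.

Lemma der_neq0 (f : R -> R) x : derivable f x 1 -> f x != 0 ->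
  \forall t \near x, f t != 0.
Proof.
move=> /derivable1_diffP /differentiable_continuous c fx.
exact: cvgr_neq0 c fx.
Qed.

Lemma der_prod (I : Type) (r : seq I) (P : pred I) (h : I -> R -> R) x :
  (forall i, P i -> derivable (h i) x 1) ->
  derivable (fun t => \prod_(i <- r | P i) h i t) x 1.
Proof.
move=> H; elim: r => [|i r IH].
  under eq_fun do rewrite big_nil; exact: derivable_cst.
under eq_fun do rewrite big_cons.
case: (boolP (P i)) => Pi; last exact: IH.
have := isd_mul (derivableP (H i Pi)) (derivableP IH).
by case.
Qed.

Lemma der_sum (I : Type) (r : seq I) (P : pred I) (h : I -> R -> R) x :
  (forall i, P i -> derivable (h i) x 1) ->
  derivable (fun t => \sum_(i <- r | P i) h i t) x 1.
Proof.
move=> H; have := @isd_sum I r P h (fun i => 'D_1 (h i) x) x.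
case; last by [].
by move=> i Pi; apply: derivableP; apply: H.
Qed.

Lemma der_mul (f g : R -> R) x : derivable f x 1 -> derivable g x 1 ->
  derivable (fun t => f t * g t) x 1.
Proof. by move=> Hf Hg; case: (isd_mul (derivableP Hf) (derivableP Hg)). Qed.

Lemma der_inv (f : R -> R) x : f x != 0 -> derivable f x 1 ->
  derivable (fun t => (f t)^-1) x 1.
Proof. exact: derivableV. Qed.

Variable n : nat.

Lemma der_det (M : R -> 'M[R]_n) x :
  (forall i j, derivable (fun t => M t i j) x 1) ->
  derivable (fun t => \det (M t)) x 1.
Proof.
move=> H; rewrite /determinant.
apply: der_sum => s _.
apply: der_mul; first exact: derivable_cst.
by apply: der_prod => i _; apply: H.
Qed.

Definition mxD (M : R -> 'M[R]_n) x (D : 'M[R]_n) :=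
  forall i j, is_derive x 1 (fun t => M t i j) (D i j).

Lemma mxD_cst (A : 'M[R]_n) x : mxD (fun _ => A) x 0.
Proof. by move=> i j; rewrite mxE; exact: is_derive_cst. Qed.

Lemma mxD_add M N D D' x : mxD M x D -> mxD N x D' ->
  mxD (fun t => M t + N t) x (D + D').
Proof.
move=> HM HN i j; rewrite mxE; under eq_fun do rewrite mxE.
exact: is_deriveD (HM i j) (HN i j).
Qed.

Lemma mxD_lin (A E : 'M[R]_n) x : mxD (fun t => A + t *: E) x E.
Proof.
move=> i j; under eq_fun do rewrite !mxE.
have H := isd_mul (@is_derive_id _ _ x 1) (@is_derive_cst _ _ _ (E i j) x 1).
have := is_deriveD (@is_derive_cst _ _ _ (A i j) x 1) H.
by rewrite mulr0 addr0 mul1r add0r; apply.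
Qed.

Lemma mxD_scale M D (c : R) x : mxD M x D -> mxD (fun t => c *: M t) x (c *: D).
Proof.
move=> HM i j; rewrite mxE; under eq_fun do rewrite mxE.
have := isd_mul (@is_derive_cst _ _ _ c x 1) (HM i j).
by rewrite mul0r add0r.
Qed.

Lemma mxD_mul M N D D' x : mxD M x D -> mxD N x D' ->
  mxD (fun t => M t *m N t) x (D *m N x + M x *m D').
Proof.
move=> HM HN i j; rewrite !mxE; under eq_fun do rewrite mxE.
rewrite -big_split /=.
apply: isd_sum => k _.
exact: isd_mul (HM i k) (HN k j).
Qed.

Lemma mxD_tr M D x : mxD M x D -> is_derive x 1 (fun t => \tr (M t)) (\tr D).
Proof. by move=> HM; rewrite /mxtrace; apply: isd_sum => i _. Qed.

Lemma mxD_unique M D D' x : mxD M x D -> mxD M x D' -> D = D'.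
Proof.
move=> H1 H2; apply/matrixP => i j.
by rewrite -(@derive_val _ _ _ _ _ _ _ (H1 i j)) -(@derive_val _ _ _ _ _ _ _ (H2 i j)).
Qed.

Lemma mxD_near M N D x : (\forall t \near x, M t = N t) -> mxD M x D -> mxD N x D.
Proof.
move=> Hn HM i j; apply: near_eq_is_derive (HM i j).
by near=> t; rewrite (near Hn t).
Unshelve. all: by end_near. Qed.

End S.

Section S.
Variable R : realType.
Variable n : nat.
Lemma mxD_inv (M : R -> 'M[R]_n) D x : M x \in unitmx -> mxD M x D ->
  mxD (fun t => invmx (M t)) x (- (invmx (M x) *m D *m invmx (M x))).
Proof.
move=> Mu HM.
have Hder : forall i j, derivable (fun t => M t i j) x 1.
  by move=> i j; case: (HM i j).
have Hdet := der_det Hder.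
have Hdet0 : \det (M x) != 0 by rewrite -unitfE -unitmxE.
have Hnear := der_neq0 Hdet Hdet0.
pose N t := (\det (M t))^-1 *: \adj (M t).
have HN : forall i j, derivable (fun t => N t i j) x 1.
  move=> i j.
  have -> : (fun t => N t i j) = fun t => (\det (M t))^-1 *
     ((-1) ^+ (j + i) * \det (row' j (col' i (M t)))).
    by apply/funext => t; rewrite /N !mxE.
  apply: der_mul; first exact: (der_inv Hdet0 Hdet).
  apply: der_mul; first exact: derivable_cst.
  apply: der_det => a b.
  have -> : (fun t => row' j (col' i (M t)) a b) = fun t => M t (lift j a) (lift i b).
    by apply/funext => t; rewrite !mxE.
  exact: Hder.
pose D' := \matrix_(i, j) 'D_1 (fun t => N t i j) x.
have HN' : mxD N x D' by move=> i j; rewrite mxE; apply: derivableP.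
have Hinv : mxD (fun t => invmx (M t)) x D'.
  apply: mxD_near HN'; near=> t.
  by rewrite /N /invmx unitmxE unitfE (near Hnear t).
have HP := mxD_mul HM Hinv.
have HP1 : mxD (fun t => M t *m invmx (M t)) x 0.
  apply: mxD_near (mxD_cst 1%:M x); near=> t.
  by rewrite mulmxV // unitmxE unitfE (near Hnear t).
have E := mxD_unique HP HP1.
suff <- : D' = - (invmx (M x) *m D *m invmx (M x)) by [].
have : invmx (M x) *m (D *m invmx (M x) + M x *m D') = 0 by rewrite E mulmx0.
rewrite mulmxDr [X in _ + X]mulmxA mulVmx // mul1mx mulmxA => /eqP.
by rewrite addrC addr_eq0 => /eqP.
Unshelve. all: by end_near. Qed.
End S.

Section P.
Variable R : realType.
Variable n : nat.
Variables (V : finType) (e : rel V).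

Lemma mxD_opp (M : R -> 'M[R]_n) D x : mxD M x D -> mxD (fun t => - M t) x (- D).
Proof.
move=> HM i j; rewrite mxE; under eq_fun do rewrite mxE.
exact: is_deriveN (HM i j).
Qed.

Definition DPhi (A F : V -> 'M[R]_n) : R :=
  \sum_(v : V) \sum_(w : V | e v w)
     \tr (F v *m invmx (A w) + A v *m (- (invmx (A w) *m F w *m invmx (A w)))).

Lemma Phi_derive (A F : V -> 'M[R]_n) : (forall w, A w \in unitmx) ->
  is_derive (0:R) (1:R) (fun t => Phi e (fun v => A v + t *: F v)) (DPhi A F).
Proof.
move=> Au; rewrite /Phi /DPhi.
apply: isd_sum => v _; apply: isd_sum => w _.
apply: mxD_tr.
have Hu : A w + 0 *: F w \in unitmx by rewrite scale0r addr0.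
have := mxD_mul (mxD_lin (A v) (F v) 0) (mxD_inv Hu (mxD_lin (A w) (F w) 0)).
by rewrite !scale0r !addr0.
Qed.

Definition HPhi (A E F : V -> 'M[R]_n) : R :=
  \sum_(v : V) \sum_(w : V | e v w)
    (- \tr (F v *m invmx (A w) *m E w *m invmx (A w))
     - \tr (E v *m invmx (A w) *m F w *m invmx (A w))
     + \tr (A v *m invmx (A w) *m E w *m invmx (A w) *m F w *m invmx (A w))
     + \tr (A v *m invmx (A w) *m F w *m invmx (A w) *m E w *m invmx (A w))).

Lemma DPhi_derive (A E F : V -> 'M[R]_n) : (forall w, A w \in unitmx) ->
  is_derive (0:R) (1:R) (fun s => DPhi (fun v => A v + s *: E v) F) (HPhi A E F).
Proof.
move=> Au; rewrite /DPhi /HPhi.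
apply: isd_sum => v _; apply: isd_sum => w _.
have Hu : A w + 0 *: E w \in unitmx by rewrite scale0r addr0.
have HN := mxD_inv Hu (mxD_lin (A w) (E w) 0).
have H1 := mxD_mul (mxD_cst (F v) 0) HN.
have H2 := mxD_mul (mxD_lin (A v) (E v) 0)
   (mxD_opp (mxD_mul (mxD_mul HN (mxD_cst (F w) 0)) HN)).
have := mxD_tr (mxD_add H1 H2).
move=> /= H. apply: is_derive_eq H _.
rewrite !scale0r !addr0 !mul0mx !add0r !mulmx0 !addr0.
rewrite !(mulmxDl, mulmxDr, mulNmx, mulmxN, opprD, opprK, mulmxA).
rewrite !raddfD /= !raddfN /=.
ring.
Qed.
End P.

Section Q.
Variable R : realType.
Variable d : nat.
Variables (V : finType) (e : rel V) (Gamma : {set V}) (z : V -> 'M[R]_d).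
Implicit Types (k l : V * 'I_d * 'I_d) (Y : coords R V d).

Definition U k (v : V) : 'M[R]_d :=
  \matrix_(i, j) (if (i <= j)%N then ((v, i, j) == k)%:R else ((v, j, i) == k)%:R).
Definition Ek k v : 'M[R]_d := if v \in Gamma then 0 else U k v.
Definition XY Y v := if v \in Gamma then z v else symmat Y v.

Lemma symmat_shift Y k s v : symmat (shift Y k s) v = symmat Y v + s *: U k v.
Proof.
apply/matrixP => i j; rewrite !mxE /shift.
by case: (i <= j)%N; case: (_ == k); rewrite ?mulr1 ?mulr0 ?addr0.
Qed.

Lemma XY_shift Y k s v : XY (shift Y k s) v = XY Y v + s *: Ek k v.
Proof.
rewrite /XY /Ek; case: (v \in Gamma); first by rewrite scaler0 addr0.
exact: symmat_shift.
Qed.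

Lemma PhiRestr_shift Y k t :
  PhiRestr e Gamma z (shift Y k t) = Phi e (fun v => XY Y v + t *: Ek k v).
Proof. by rewrite /PhiRestr; congr Phi; apply/funext => v; rewrite -XY_shift. Qed.

Lemma pderiv_val Y k : (forall w, XY Y w \in unitmx) ->
  pderiv k (PhiRestr e Gamma z) Y = DPhi e (XY Y) (Ek k).
Proof.
move=> Hu; rewrite /pderiv derive1E.
under eq_fun do rewrite PhiRestr_shift.
by case: (@Phi_derive _ _ _ e (XY Y) (Ek k) Hu).
Qed.

Lemma hessian_val Y k l : (forall w, XY Y w \in unitmx) ->
  hessian (PhiRestr e Gamma z) Y k l = HPhi e (XY Y) (Ek k) (Ek l).
Proof.
move=> Hu; rewrite /hessian {1}/pderiv derive1E.
pose p s := \prod_(w : V) \det (XY Y w + s *: Ek k w).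
have Hp : derivable p 0 1.
  apply: der_prod => w _; apply: der_det => i j.
  by case: (mxD_lin (XY Y w) (Ek k w) 0 i j).
have Hp0 : p 0 != 0.
  rewrite /p; apply/prodf_neq0 => w _.
  by rewrite scale0r addr0 -unitfE -unitmxE.
have Hn := der_neq0 Hp Hp0.
have Hg := @DPhi_derive _ _ _ e (XY Y) (Ek k) (Ek l) Hu.
case: Hg => _ <-.
apply: near_eq_derive.
near=> s.
have Hs : p s != 0 by apply: (near Hn s).
rewrite pderiv_val; last first.
  move=> w; rewrite XY_shift unitmxE unitfE.
  by move: Hs; rewrite /p => /prodf_neq0; apply.
by congr DPhi; apply/funext => v; rewrite XY_shift.
Unshelve. all: by end_near. Qed.
End Q.

Section G.
Variables (V : finType) (e : rel V).

Lemma reach_sink : acyclic e -> forall u, exists s, connect e u s /\ is_sink e s.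
Proof.
move=> Hac.
suff H : forall m u, (#|[set w | connect e u w]| <= m)%N -> exists s, connect e u s /\ is_sink e s.
  by move=> u; apply: (H _ u (leqnn _)).
elim=> [|m IH] u Hm.
  by move: Hm; rewrite leqn0 => /eqP /card0_eq /(_ u); rewrite !inE connect0.
case: (boolP (is_sink e u)) => Hs; first by exists u; rewrite connect0.
move: Hs; rewrite /is_sink negb_forall => /existsP [w]; rewrite negbK => euw.
have [s [Hws Hs]] : exists s, connect e w s /\ is_sink e s.
  apply: IH; rewrite -ltnS; apply: leq_trans Hm.
  apply: proper_card; apply/properP; split.
    apply/fintype.subsetP => y; rewrite !inE => Hy.
    by apply: connect_trans Hy; apply: connect1.
  exists u; first by rewrite inE connect0.
  by rewrite inE; apply: Hac.
exists s; split => //; apply: connect_trans Hws; exact: connect1.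
Qed.

Lemma connect_const (T : Type) (g : V -> T) :
  (forall v w, e v w -> g w = g v) -> forall u s, connect e u s -> g s = g u.
Proof.
move=> He u s /connectP [p Hp ->]; elim: p u Hp => [|y p IH] u //= /andP [euy Hp].
by rewrite IH // (He _ _ euy).
Qed.

Lemma swap_edges (R : nmodType) (F : V -> V -> R) :
  \sum_v \sum_(w | e v w) F v w = \sum_w \sum_(v | e v w) F v w.
Proof.
under eq_bigr do rewrite big_mkcond.
rewrite exchange_big; apply: eq_bigr => w _.
by rewrite [RHS]big_mkcond.
Qed.
End G.

Section Tr.
Variables (R : realType) (d : nat).
Lemma tr_sq (D : 'M[R]_d) : D^T = D -> \tr (D *m D) = \sum_i \sum_j D i j ^+ 2.
Proof.
move=> HD; rewrite /mxtrace; apply: eq_bigr => i _; rewrite mxE.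
apply: eq_bigr => j _.
have -> : D j i = D i j by rewrite -[in LHS]HD mxE.
by rewrite expr2.
Qed.

Lemma tr_sq_ge0 (D : 'M[R]_d) : D^T = D -> 0 <= \tr (D *m D).
Proof.
move=> HD; rewrite tr_sq //; apply: sumr_ge0 => i _; apply: sumr_ge0 => j _.
exact: sqr_ge0.
Qed.

Lemma tr_sq_eq0 (D : 'M[R]_d) : D^T = D -> \tr (D *m D) = 0 -> D = 0.
Proof.
move=> HD; rewrite tr_sq // => H; apply/matrixP => i j; rewrite mxE.
have H1 : \sum_j D i j ^+ 2 = 0.
  apply: (psumr_eq0P _ H) => // k _; apply: sumr_ge0 => j' _; exact: sqr_ge0.
have H2 : D i j ^+ 2 = 0.
  apply: (psumr_eq0P _ H1) => // k _; exact: sqr_ge0.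
by apply/eqP; rewrite -sqrf_eq0 H2.
Qed.
End Tr.

Section F.
Variables (R : realType) (d : nat) (V : finType) (e : rel V) (Gamma : {set V}).

Definition qterm (a : V -> R) (h : V -> 'M[R]_d) v w :=
  - ((a w)^-1 * (a w)^-1) * (\tr (h w *m h v) + \tr (h v *m h w))
  + 2 * a v * ((a w)^-1 * (a w)^-1 * (a w)^-1) * \tr (h w *m h w).

Lemma final_pos (a : V -> R) (h : V -> 'M[R]_d) :
  acyclic e -> (forall v, is_sink e v || is_source e v -> v \in Gamma) ->
  (forall v, 0 < a v) -> (forall v, (h v)^T = h v) ->
  (forall v, v \in Gamma -> h v = 0) ->
  (forall u, u \notin Gamma ->
     \sum_(w | e u w) (a w)^-1 = \sum_(v | e v u) a v * ((a u)^-1 * (a u)^-1)) ->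
  (exists u, h u != 0) ->
  0 < \sum_v \sum_(w | e v w) qterm a h v w.
Proof.
move=> Hac Hsink Ha Hh HG Hcrit [u0 Hu0].
have Ha0 : forall v, a v != 0 by move=> v; rewrite gt_eqF.
pose T u := \tr (h u *m h u).
pose D v w := (a w)^-1 *: h w - (a v)^-1 *: h v.
pose S v w := a v * (a w)^-1 * \tr (D v w *m D v w).
have HDs : forall v w, (D v w)^T = D v w.
  by move=> v w; rewrite /D linearB /= !linearZ /= !Hh.
have HS0 : forall v w, 0 <= S v w.
  move=> v w; rewrite /S; apply: mulr_ge0; last exact: tr_sq_ge0.
  by apply: mulr_ge0; [apply: ltW | rewrite invr_ge0; apply: ltW].
have Htr : forall v w, \tr (D v w *m D v w) =
   (a w)^-1 * (a w)^-1 * T w - (a w)^-1 * (a v)^-1 * (\tr (h w *m h v) + \tr (h v *m h w))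
   + (a v)^-1 * (a v)^-1 * T v.
  move=> v w; rewrite /D /T !(mulmxBl, mulmxBr) -!scalemxAl -!scalemxAr !scalerA.
  rewrite !raddfB /= !mxtraceZ; ring.
have Hedge : forall v w, qterm a h v w = S v w +
   (a v * ((a w)^-1 * (a w)^-1 * (a w)^-1) * T w - (a v)^-1 * (a w)^-1 * T v).
  move=> v w; rewrite /S Htr /qterm /T.
  have := Ha0 v; have := Ha0 w => Hw Hv; field.
  by rewrite Hw Hv.
have Hrest : \sum_v \sum_(w | e v w)
    (a v * ((a w)^-1 * (a w)^-1 * (a w)^-1) * T w - (a v)^-1 * (a w)^-1 * T v) = 0.
  under eq_bigr do rewrite sumrB.
  rewrite sumrB swap_edges -sumrB big1 // => u _.
  have -> : \sum_(i | e i u) a i * ((a u)^-1 * (a u)^-1 * (a u)^-1) * T u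
     = (a u)^-1 * T u * \sum_(v | e v u) a v * ((a u)^-1 * (a u)^-1).
    by rewrite mulr_sumr; apply: eq_bigr => v _; ring.
  have -> : \sum_(i | e u i) (a u)^-1 * (a i)^-1 * T u
     = (a u)^-1 * T u * \sum_(w | e u w) (a w)^-1.
    by rewrite mulr_sumr; apply: eq_bigr => v _; ring.
  rewrite -mulrBr.
  case: (boolP (u \in Gamma)) => Hu.
    by rewrite /T HG // mul0mx raddf0 mulr0 mul0r.
  by rewrite Hcrit // subrr mulr0.
have -> : \sum_v \sum_(w | e v w) qterm a h v w = \sum_v \sum_(w | e v w) S v w.
  under eq_bigr do under eq_bigr do rewrite Hedge.
  under eq_bigr do rewrite big_split /=.
  by rewrite big_split /= Hrest addr0.
rewrite lt_neqAle; apply/andP; split; last first.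
  by apply: sumr_ge0 => v _; apply: sumr_ge0 => w _.
apply/eqP => /esym HQ.
have HSz : forall v w, e v w -> S v w = 0.
  move=> v w evw.
  have H1 : \sum_(w | e v w) S v w = 0.
    apply: (psumr_eq0P _ HQ) => // v' _; exact: sumr_ge0.
  exact: (psumr_eq0P _ H1).
pose g u := (a u)^-1 *: h u.
have Hg : forall v w, e v w -> g w = g v.
  move=> v w evw; have := HSz v w evw; rewrite /S => /eqP.
  rewrite !mulf_eq0 invr_eq0 (negPf (Ha0 v)) (negPf (Ha0 w)) /= => /eqP.
  move/(tr_sq_eq0 (HDs v w)); rewrite /D => /eqP; rewrite subr_eq0 => /eqP.
  by [].
have [s [Hus Hs]] := reach_sink Hac u0.
have Hgs := connect_const Hg Hus.
have HsG : s \in Gamma by apply: Hsink; rewrite Hs.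
move: Hgs; rewrite /g HG // scaler0 => /esym H0.
move: Hu0; have -> : h u0 = a u0 *: ((a u0)^-1 *: h u0).
  by rewrite scalerA mulfV // scale1r.
by rewrite H0 scaler0 eqxx.
Qed.
End F.

Section W.
Variables (R : realType) (d : nat) (V : finType) (e : rel V) (Gamma : {set V}).
Variable a : V -> R.
Hypothesis Ha0 : forall v, a v != 0.
Let A := fun v => (a v)%:M : 'M[R]_d.

Lemma HPhi_scalar (E F : V -> 'M[R]_d) :
  HPhi e A E F = \sum_v \sum_(w | e v w)
   (- ((a w)^-1 * (a w)^-1) * (\tr (E w *m F v) + \tr (E v *m F w))
    + 2 * a v * ((a w)^-1 * (a w)^-1 * (a w)^-1) * \tr (E w *m F w)).
Proof.
rewrite /HPhi /A; apply: eq_bigr => v _; apply: eq_bigr => w _.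
rewrite !invmx_scalar.
do 6! rewrite ?mul_mx_scalar ?mul_scalar_mx -?scalemxAl.
rewrite !mxtraceZ.
rewrite [\tr (F v *m E w)]mxtrace_mulC [\tr (F w *m E w)]mxtrace_mulC.
ring.
Qed.

Lemma DPhi_scalar (F : V -> 'M[R]_d) :
  DPhi e A F = \sum_v \sum_(w | e v w)
   ((a w)^-1 * \tr (F v) - a v * ((a w)^-1 * (a w)^-1) * \tr (F w)).
Proof.
rewrite /DPhi /A; apply: eq_bigr => v _; apply: eq_bigr => w _.
rewrite !invmx_scalar.
do 6! rewrite ?mul_mx_scalar ?mul_scalar_mx -?scalemxAl.
rewrite ?scalerN !raddfD /= raddfN /= !mxtraceZ.
ring.
Qed.

Lemma crit_sum u :
  \sum_v \sum_(w | e v w) ((a w)^-1 * (v == u)%:R - a v * ((a w)^-1 * (a w)^-1) * (w == u)%:R)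
  = \sum_(w | e u w) (a w)^-1 - \sum_(v | e v u) a v * ((a u)^-1 * (a u)^-1).
Proof.
under eq_bigr do rewrite sumrB.
rewrite sumrB; congr (_ - _).
  rewrite (bigD1 u) //= [X in _ + X]big1 ?addr0.
    by apply: eq_bigr => w _; rewrite eqxx mulr1.
  by move=> v /negPf Hv; apply: big1 => w _; rewrite Hv mulr0.
rewrite swap_edges (bigD1 u) //= [X in _ + X]big1 ?addr0.
  by apply: eq_bigr => v _; rewrite eqxx mulr1.
by move=> w /negPf Hw; apply: big1 => v _; rewrite Hw mulr0.
Qed.

Lemma tr_Ek u (i0 : 'I_d) v : u \notin Gamma ->
  \tr (Ek R Gamma (u, i0, i0) v) = (v == u)%:R.
Proof.
move=> Hu; rewrite /Ek; case: (boolP (v \in Gamma)) => Hv.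
  have -> : (v == u) = false by apply/negP => /eqP Hvu; move: Hu; rewrite -Hvu Hv.
  by rewrite raddf0.
rewrite /mxtrace (bigD1 i0) //= big1 ?addr0.
  by rewrite /U mxE leqnn !xpair_eqE eqxx !andbT.
move=> i Hi; rewrite /U mxE leqnn; apply/eqP; rewrite pnatr_eq0 eqb0.
by rewrite !xpair_eqE (negPf Hi) !andbF.
Qed.
End W.

Section Bil.
Variables (R : realType) (d : nat) (K : finType) (p : pred K) (c : K -> R).

Lemma bil (P Q : K -> 'M[R]_d) :
  \sum_(k | p k) \sum_(l | p l) c k * \tr (P k *m Q l) * c l =
  \tr ((\sum_(k | p k) c k *: P k) *m (\sum_(l | p l) c l *: Q l)).
Proof.
rewrite mulmx_suml raddf_sum; apply: eq_bigr => k _.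
rewrite mulmx_sumr raddf_sum; apply: eq_bigr => l _.
rewrite -scalemxAl -scalemxAr.
change (c k * \tr (P k *m Q l) * c l = \tr (c k *: (c l *: (P k *m Q l)))); rewrite !mxtraceZ; ring.
Qed.

Lemma quad_exch (V : finType) (e : rel V) (T : K -> K -> V -> V -> R) :
  \sum_(k | p k) \sum_(l | p l) c k * (\sum_v \sum_(w | e v w) T k l v w) * c l =
  \sum_v \sum_(w | e v w) \sum_(k | p k) \sum_(l | p l) c k * T k l v w * c l.
Proof.
have E1 : forall k l, c k * (\sum_v \sum_(w | e v w) T k l v w) * c l =
   \sum_v \sum_(w | e v w) c k * T k l v w * c l.
  move=> k l; rewrite mulr_sumr mulr_suml; apply: eq_bigr => v _.
  by rewrite mulr_sumr mulr_suml; apply: eq_bigr => w _.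
under eq_bigr do under eq_bigr do rewrite E1.
under eq_bigr do rewrite exchange_big.
rewrite exchange_big; apply: eq_bigr => v _.
under eq_bigr do rewrite exchange_big.
by rewrite exchange_big.
Qed.
End Bil.

Lemma EkT (R : realType) (d : nat) (V : finType) (Gamma : {set V}) k v :
  (Ek R (d:=d) Gamma k v)^T = Ek R Gamma k v.
Proof.
rewrite /Ek; case: (v \in Gamma); first by rewrite trmx0.
apply/matrixP => i j; rewrite /U !mxE.
case: (ltngtP i j) => [H|H|/val_inj ->] //; rewrite ?(ltnW H) leqNgt H //.
Qed.

Unset Implicit Arguments.
Theorem mainTheorem17 (R : realType) (d : nat) (V : finType) (e : rel V)
  (Gamma : {set V}) (z : V -> 'M[R]_d) (x : V -> 'M[R]_d) :
  acyclic e ->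
  (forall v, is_sink e v || is_source e v -> v \in Gamma) ->
  (exists v, v \notin Gamma) ->
  (forall v, v \in Gamma -> pos_scalar (z v)) ->
  (* x lies in P_d^V(z) *)
  (forall v, posdef (x v)) ->
  (forall v, v \in Gamma -> x v = z v) ->
  (* every x_v is a positive multiple of I_d *)
  (forall v, pos_scalar (x v)) ->
  (* x is a critical point of Phi_d restricted to P_d^V(z) *)
  (forall k, is_var Gamma k ->
     pderiv k (PhiRestr e Gamma z) (fun k' => x k'.1.1 k'.1.2 k'.2) = 0) ->
  hessian_posdef Gamma (PhiRestr e Gamma z) (fun k' => x k'.1.1 k'.1.2 k'.2).
Proof.
move=> Hac Hsink _ _ Hpd HxG Hsc Hcrit c [[[u0 i1] j1] [Hk0 Hc0]].
pose a v := x v i1 i1.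
have Hxa : forall v, x v = (a v)%:M.
  move=> v; rewrite /a; have [cv [_ ->]] := Hsc v.
  by rewrite mxE eqxx mulr1n.
have Ha : forall v, 0 < a v.
  move=> v; rewrite /a; have [cv [cv0 ->]] := Hsc v.
  by rewrite mxE eqxx mulr1n.
have Ha0 : forall v, a v != 0 by move=> v; rewrite gt_eqF.
have HXY : XY Gamma z (fun k' => x k'.1.1 k'.1.2 k'.2) = fun v => (a v)%:M.
  apply/funext => v; rewrite /XY; case: (boolP (v \in Gamma)) => Hv.
    by rewrite -HxG // Hxa.
  rewrite -Hxa; apply/matrixP => i j; rewrite /symmat mxE /=.
  case: ifP => // _.
  by have := (Hpd v).1 => /matrixP /(_ i j); rewrite mxE.
have Hu : forall w, XY Gamma z (fun k' => x k'.1.1 k'.1.2 k'.2) w \in unitmx.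
  by move=> w; rewrite HXY unitmxE det_scalar unitfE expf_neq0.
under eq_bigr do under eq_bigr do rewrite (hessian_val e _ _ Hu) HXY (HPhi_scalar e a).
rewrite quad_exch.
pose h v := \sum_(k | is_var Gamma k) c k *: Ek R Gamma k v.
have Hlin : forall (al be : R) (f g hh : V * 'I_d * 'I_d -> V * 'I_d * 'I_d -> R),
  \sum_(k | is_var Gamma k) \sum_(l | is_var Gamma l) c k * (al * (f k l + g k l) + be * hh k l) * c l
  = al * (\sum_(k | is_var Gamma k) \sum_(l | is_var Gamma l) c k * f k l * c l
        + \sum_(k | is_var Gamma k) \sum_(l | is_var Gamma l) c k * g k l * c l)
    + be * \sum_(k | is_var Gamma k) \sum_(l | is_var Gamma l) c k * hh k l * c l.
  move=> al be f g hh; rewrite mulrDr !mulr_sumr -!big_split /=.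
  apply: eq_bigr => k _; rewrite !mulr_sumr -!big_split /=.
  by apply: eq_bigr => l _; ring.
have Hq : forall v w, \sum_(k | is_var Gamma k) \sum_(l | is_var Gamma l)
   c k * (- ((a w)^-1 * (a w)^-1) * (\tr (Ek R Gamma k w *m Ek R Gamma l v)
      + \tr (Ek R Gamma k v *m Ek R Gamma l w))
    + 2 * a v * ((a w)^-1 * (a w)^-1 * (a w)^-1) * \tr (Ek R Gamma k w *m Ek R Gamma l w)) * c l
   = qterm a h v w.
  move=> v w; rewrite Hlin.
  rewrite (bil _ _ (fun k => Ek R Gamma k w) (fun l => Ek R Gamma l v)).
  rewrite (bil _ _ (fun k => Ek R Gamma k v) (fun l => Ek R Gamma l w)).
  by rewrite (bil _ _ (fun k => Ek R Gamma k w) (fun l => Ek R Gamma l w)).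
under eq_bigr do under eq_bigr do rewrite Hq.
apply: (final_pos (Gamma := Gamma)) => //.
- move=> v; apply/matrixP => i j; rewrite /h mxE !summxE; apply: eq_bigr => k _.
  rewrite !mxE; congr (_ * _).
  by have := @EkT R d V Gamma k v => /matrixP /(_ i j); rewrite mxE.
- by move=> v Hv; rewrite /h big1 // => k _; rewrite /Ek Hv scaler0.
- move=> u Hu'.
  have Hk : is_var Gamma (u, i1, i1) by rewrite /is_var /= Hu' leqnn.
  have := Hcrit _ Hk; rewrite (pderiv_val e _ Hu) HXY (DPhi_scalar e a).
  under eq_bigr do under eq_bigr do rewrite !(@tr_Ek R d V Gamma u i1 _ Hu').
  by rewrite crit_sum => /eqP; rewrite subr_eq0 => /eqP.
- exists u0; apply/eqP => /matrixP /(_ i1 j1); rewrite /h summxE (bigD1 (u0, i1, j1)) //=.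
  rewrite big1 ?addr0.
    move: Hk0; rewrite /is_var /= => /andP [Hu0 Hij].
    rewrite !mxE /Ek (negPf Hu0) /U mxE Hij eqxx mulr1 => H.
    by move: Hc0; rewrite H eqxx.
  move=> k Hk; rewrite !mxE /Ek.
  move: Hk0; rewrite /is_var /= => /andP [Hu0 Hij].
  rewrite (negPf Hu0) /U mxE Hij.
  have -> : ((u0, i1, j1) == k) = false by apply/negP => /eqP Hk'; move: Hk; rewrite -Hk' eqxx andbF.
  by rewrite mulr0.
Qed.
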